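(* For every type $T$ there is a natural number $d$ and: an injective map $\mathsf{Convert}$ from nested relations of type $T$ to nested relations of the monadic type $\mathfrak U_d$ that is definable by an $\mathrm{NRC}$ expression; an $\mathrm{NRC}[\mathsf{get}]$ expression $\mathsf{Convert}^{-1}$ from $\mathfrak U_d$ to $T$ such that $\mathsf{Convert}^{-1}(\mathsf{Convert}(x))=x$ for every nested relation $x$ of type $T$; and a $\Delta_0$ formula $\mathrm{Im}_{\mathsf{Convert}}(y)$ with $y$ of type $\mathfrak U_d$ such that $\mathrm{Im}_{\mathsf{Convert}}(y)$ holds if and only if $y=\mathsf{Convert}(x)$ for some nested relation $x$ of type $T$. (Applying this componentwise, the same holds for any nested relational schema, i.e. any finite list of typed variables, mapped to a schema all of whose types are monadic.)
   Context: Types: $T,U ::= \mathfrak U \mid \mathsf{Unit}\mid T\times U\mid \mathsf{Set}(T)$ interpreted as nested relations (atoms, one-element set, products, all subsets). Monadic types: $\mathfrak U_0 := \mathfrak U$, $\mathfrak U_{n+1} := \mathsf{Set}(\mathfrak U_n)$. $\Delta_0$ formulas: built from $t=_{\mathfrak U}u$, $t\neq_{\mathfrak U}u$, $\top,\bot$ with $\wedge,\vee$ and bounded quantifiers $\forall x\in t$, $\exists x\in t$ over terms built from variables by $\langle\rangle$, pairing and projections. $\mathrm{NRC}[\mathsf{get}]$: typed expressions built from variables, $\langle\rangle$, pairing, projections, $\emptyset$, singleton, $\cup$, $\setminus$, big union $\bigcup\{E_1\mid x\in E_2\}$, and $\mathsf{get}_T(E)$ (the unique element of a singleton $E$, a fixed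 default otherwise); $\mathrm{NRC}$ is the fragment without $\mathsf{get}$. *)

(* Defs.v *)
From Stdlib Require Import List ClassicalEpsilon.
Import ListNotations.
Set Implicit Arguments.

Inductive ty : Type :=
| TUr : ty
| TUnit : ty
| TProd : ty -> ty -> ty
| TSet : ty -> ty.

Fixpoint mon (n : nat) : ty :=
  match n with O => TUr | S n => TSet (mon n) end.

(* Interpretation as nested relations over a universe of atoms U:
   sets of type Set(T) are arbitrary subsets, represented as predicates. *)
Fixpoint sem (U : Type) (t : ty) : Type :=
  match t with
  | TUr => U
  | TUnit => unit
  | TProd a b => (sem U a * sem U b)%type
  | TSet a => sem U a -> Prop
  end.

Inductive var : list ty -> ty -> Type :=
| Vz : forall G t, var (t :: G) t
| Vs : forall G t s, var G t -> var (s :: G) t.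

Fixpoint env (U : Type) (G : list ty) : Type :=
  match G with nil => unit | t :: G => (sem U t * env U G)%type end.

Fixpoint lookup {U : Type} {G t} (v : var G t) : env U G -> sem U t :=
  match v in var G t return env U G -> sem U t with
  | Vz _ _ => fun e => fst e
  | Vs _ v => fun e => lookup v (snd e)
  end.

Inductive expr : list ty -> ty -> Type :=
| EVar : forall G t, var G t -> expr G t
| EUnit : forall G, expr G TUnit
| EPair : forall G a b, expr G a -> expr G b -> expr G (TProd a b)
| EFst : forall G a b, expr G (TProd a b) -> expr G a
| ESnd : forall G a b, expr G (TProd a b) -> expr G b
| EEmpty : forall G t, expr G (TSet t)
| ESing : forall G t, expr G t -> expr G (TSet t)
| EUnion : forall G t, expr G (TSet t) -> expr G (TSet t) -> expr G (TSet t)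
| EDiff : forall G t, expr G (TSet t) -> expr G (TSet t) -> expr G (TSet t)
(* EBigUnion E1 E2 = \bigcup { E1 | x in E2 }, x bound (index 0) in E1 *)
| EBigUnion : forall G s t, expr (s :: G) (TSet t) -> expr G (TSet s) -> expr G (TSet t)
| EGet : forall G t, expr G (TSet t) -> expr G t.

Fixpoint get_free {G t} (e : expr G t) : Prop :=
  match e with
  | EVar _ => True
  | EUnit _ => True
  | EPair e1 e2 => get_free e1 /\ get_free e2
  | EFst e1 => get_free e1
  | ESnd e1 => get_free e1
  | EEmpty _ _ => True
  | ESing e1 => get_free e1
  | EUnion e1 e2 => get_free e1 /\ get_free e2
  | EDiff e1 e2 => get_free e1 /\ get_free e2
  | EBigUnion e1 e2 => get_free e1 /\ get_free e2
  | EGet _ => False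
  end.

Fixpoint default {U : Type} (u0 : U) (t : ty) : sem U t :=
  match t return sem U t with
  | TUr => u0
  | TUnit => tt
  | TProd a b => (default u0 a, default u0 b)
  | TSet a => fun _ => False
  end.

Lemma ex_of_unique (A : Type) (P : A -> Prop) : (exists! x, P x) -> exists x, P x.
Proof. intros [x [Hx _]]; exists x; exact Hx. Qed.

(* get: the unique element of a singleton, the default otherwise *)
Definition get_val {U : Type} (u0 : U) {t : ty} (A : sem U t -> Prop) : sem U t :=
  match excluded_middle_informative (exists! x, A x) with
  | left h => proj1_sig (constructive_indefinite_description _ (@ex_of_unique _ _ h))
  | right _ => default u0 t
  end.

Fixpoint eval {U : Type} (u0 : U) {G t} (e : expr G t) : env U G -> sem U t :=
  match e in expr G t return env U G -> sem U t with
  | EVar v => fun r => lookup v r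
  | EUnit _ => fun _ => tt
  | EPair e1 e2 => fun r => (eval u0 e1 r, eval u0 e2 r)
  | EFst e1 => fun r => fst (eval u0 e1 r)
  | ESnd e1 => fun r => snd (eval u0 e1 r)
  | EEmpty _ _ => fun _ _ => False
  | ESing e1 => fun r y => y = eval u0 e1 r
  | EUnion e1 e2 => fun r y => eval u0 e1 r y \/ eval u0 e2 r y
  | EDiff e1 e2 => fun r y => eval u0 e1 r y /\ ~ eval u0 e2 r y
  | EBigUnion e1 e2 => fun r y =>
      exists x, eval u0 e2 r x /\ eval u0 e1 (x, r) y
  | EGet e1 => fun r => get_val u0 (eval u0 e1 r)
  end.

Inductive term : list ty -> ty -> Type :=
| TmVar : forall G t, var G t -> term G t
| TmUnit : forall G, term G TUnit
| TmPair : forall G a b, term G a -> term G b -> term G (TProd a b)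
| TmFst : forall G a b, term G (TProd a b) -> term G a
| TmSnd : forall G a b, term G (TProd a b) -> term G b.

Fixpoint teval {U : Type} {G t} (m : term G t) : env U G -> sem U t :=
  match m in term G t return env U G -> sem U t with
  | TmVar v => fun r => lookup v r
  | TmUnit _ => fun _ => tt
  | TmPair m1 m2 => fun r => (teval m1 r, teval m2 r)
  | TmFst m1 => fun r => fst (teval m1 r)
  | TmSnd m1 => fun r => snd (teval m1 r)
  end.

(* Delta_0 formulas; bounded quantifiers bind index 0 *)
Inductive d0 : list ty -> Type :=
| FEqU : forall G, term G TUr -> term G TUr -> d0 G
| FNeqU : forall G, term G TUr -> term G TUr -> d0 G
| FTrue : forall G, d0 G
| FFalse : forall G, d0 G
| FAnd : forall G, d0 G -> d0 G -> d0 G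
| FOr : forall G, d0 G -> d0 G -> d0 G
| FForallIn : forall G s, term G (TSet s) -> d0 (s :: G) -> d0 G
| FExistsIn : forall G s, term G (TSet s) -> d0 (s :: G) -> d0 G.

Fixpoint holds {U : Type} {G} (f : d0 G) : env U G -> Prop :=
  match f in d0 G return env U G -> Prop with
  | FEqU m1 m2 => fun r => teval m1 r = teval m2 r
  | FNeqU m1 m2 => fun r => teval m1 r <> teval m2 r
  | FTrue _ => fun _ => True
  | FFalse _ => fun _ => False
  | FAnd f1 f2 => fun r => holds f1 r /\ holds f2 r
  | FOr f1 f2 => fun r => holds f1 r \/ holds f2 r
  | FForallIn m f1 => fun r => forall x, teval m r x -> holds f1 (x, r)
  | FExistsIn m f1 => fun r => exists x, teval m r x /\ holds f1 (x, r)
  end.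

(* Main.v *)
Require Import Defs.
From Stdlib Require Import List Lia Classical ClassicalEpsilon FunctionalExtensionality PropExtensionality Setoid.
Import ListNotations.

Fixpoint D (T : ty) : nat :=
  match T with TUr => 0 | TUnit => 0 | TSet a => S (D a)
  | TProd a b => S (S (Nat.max (D a) (D b))) end.

Fixpoint lift_ur {U : Type} (L : nat) (a : U) : sem U (mon (S L)) :=
  match L return sem U (mon (S L)) with
  | 0 => fun y => y = a
  | S L => fun y => y = lift_ur L a end.

Definition kp {U : Type} {n} (A B : sem U (mon n)) : sem U (TSet (TSet (mon n))) :=
  fun w => w = (fun u => u = A) \/ w = (fun u => u = A \/ u = B).

Fixpoint cs {U : Type} (T : ty) : forall L, sem U T -> sem U (mon (S L)) :=
  match T return forall L, sem U T -> sem U (mon (S L)) with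
  | TUr => fun L a => lift_ur L a
  | TUnit => fun L _ _ => False
  | TSet a => fun L => match L return sem U (TSet a) -> sem U (mon (S L)) with
      | 0 => fun _ _ => False
      | S L' => fun X w => exists x, X x /\ w = cs a L' x end
  | TProd a b => fun L => match L return sem U (TProd a b) -> sem U (mon (S L)) with
      | S (S L') => fun p => kp (cs a L' (fst p)) (cs b L' (snd p))
      | _ => fun _ _ => False end
  end.

Fixpoint liftE (L : nat) : forall G, expr G TUr -> expr G (mon (S L)) :=
  match L with
  | 0 => fun G e => ESing e
  | S L => fun G e => ESing (liftE L G e) end.

Fixpoint conv (T : ty) : forall L G, expr G T -> expr G (mon (S L)) :=
  match T with
  | TUr => fun L G e => liftE L G e
  | TUnit => fun L G _ => EEmpty G (mon L)
  | TSet a => fun L => match L with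
      | 0 => fun G _ => EEmpty G TUr
      | S L' => fun G e => EBigUnion (ESing (conv a L' _ (EVar (Vz _ _)))) e end
  | TProd a b => fun L => match L with
      | S (S L') => fun G e =>
          EUnion (ESing (ESing (conv a L' G (EFst e))))
                 (ESing (EUnion (ESing (conv a L' G (EFst e))) (ESing (conv b L' G (ESnd e)))))
      | _ => fun G _ => EEmpty G _ end
  end.

Definition inter {G K} (p : var G (TSet (TSet K))) : expr G (TSet K) :=
  EDiff (EBigUnion (EVar (Vz G (TSet K))) (EVar p))
        (EBigUnion (EDiff (EBigUnion (EVar (Vz _ (TSet K))) (EVar (Vs (TSet K) p)))
                          (EVar (Vz G (TSet K)))) (EVar p)).

Definition Dp {G K} (p : var G (TSet (TSet K))) : expr G (TSet K) :=
  EDiff (EBigUnion (EVar (Vz G (TSet K))) (EVar p)) (inter p).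

Definition Zp {G K} (p : var G (TSet (TSet K))) : expr G (TSet TUnit) :=
  EDiff (ESing (EUnit G)) (EBigUnion (ESing (EUnit _)) (Dp p)).

Definition sndS {G K} (p : var G (TSet (TSet K))) : expr G (TSet K) :=
  EUnion (Dp p) (EBigUnion (inter (Vs TUnit p)) (Zp p)).

Definition letE {G s t} (E : expr G s) (f : expr (s :: G) t) : expr G t :=
  EGet (EBigUnion (ESing f) (ESing E)).

Fixpoint invUr (L : nat) : forall G, var G (mon (S L)) -> expr G TUr :=
  match L with
  | 0 => fun G v => EGet (EVar v)
  | S L => fun G v => EGet (EBigUnion (ESing (invUr L _ (Vz G _))) (EVar v)) end.

Fixpoint inv (T : ty) : forall L G, var G (mon (S L)) -> expr G T :=
  match T with
  | TUr => invUr
  | TUnit => fun L G _ => EUnit G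
  | TSet a => fun L => match L with
      | 0 => fun G _ => EEmpty G a
      | S L' => fun G v => EBigUnion (ESing (inv a L' _ (Vz G _))) (EVar v) end
  | TProd a b => fun L => match L with
      | S (S L') => fun G p =>
          EPair (letE (EGet (inter p)) (inv a L' _ (Vz G _)))
                (letE (EGet (sndS p)) (inv b L' _ (Vz G _)))
      | _ => fun G _ => EGet (EEmpty G _) end
  end.

Fixpoint eqf (n : nat) : forall G, var G (mon n) -> var G (mon n) -> d0 G :=
  match n return forall G, var G (mon n) -> var G (mon n) -> d0 G with
  | 0 => fun G a b => FEqU (TmVar a) (TmVar b)
  | S n => fun G a b =>
      FAnd (FForallIn (TmVar a) (FExistsIn (TmVar (Vs _ b)) (eqf n _ (Vs _ (Vz _ _)) (Vz _ _))))
           (FForallIn (TmVar b) (FExistsIn (TmVar (Vs _ a)) (eqf n _ (Vz _ _) (Vs _ (Vz _ _)))))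
  end.

Definition isSing {G n} (w : var G (TSet (mon n))) (A : var G (mon n)) : d0 G :=
  FAnd (FForallIn (TmVar w) (eqf n _ (Vz _ _) (Vs _ A)))
       (FExistsIn (TmVar w) (eqf n _ (Vz _ _) (Vs _ A))).

Definition isPair {G n} (w : var G (TSet (mon n))) (A B : var G (mon n)) : d0 G :=
  FAnd (FForallIn (TmVar w) (FOr (eqf n _ (Vz _ _) (Vs _ A)) (eqf n _ (Vz _ _) (Vs _ B))))
   (FAnd (FExistsIn (TmVar w) (eqf n _ (Vz _ _) (Vs _ A)))
         (FExistsIn (TmVar w) (eqf n _ (Vz _ _) (Vs _ B)))).

Definition isKP {G n} (y : var G (TSet (TSet (mon n)))) (A B : var G (mon n)) : d0 G :=
  FAnd (FForallIn (TmVar y) (FOr (isSing (Vz _ _) (Vs _ A)) (isPair (Vz _ _) (Vs _ A) (Vs _ B))))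
   (FAnd (FExistsIn (TmVar y) (isSing (Vz _ _) (Vs _ A)))
         (FExistsIn (TmVar y) (isPair (Vz _ _) (Vs _ A) (Vs _ B)))).

Fixpoint imUr (L : nat) : forall G, var G (mon (S L)) -> d0 G :=
  match L return forall G, var G (mon (S L)) -> d0 G with
  | 0 => fun G v => FExistsIn (TmVar v) (FForallIn (TmVar (Vs _ v)) (eqf 0 _ (Vz _ _) (Vs _ (Vz _ _))))
  | S L => fun G v => FExistsIn (TmVar v)
      (FAnd (imUr L _ (Vz _ _)) (FForallIn (TmVar (Vs _ v)) (eqf (S L) _ (Vz _ _) (Vs _ (Vz _ _)))))
  end.

Fixpoint im (T : ty) : forall L G, var G (mon (S L)) -> d0 G :=
  match T with
  | TUr => imUr
  | TUnit => fun L G v => FForallIn (TmVar v) (FFalse _)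
  | TSet a => fun L => match L return forall G, var G (mon (S L)) -> d0 G with
      | 0 => fun G _ => FFalse G
      | S L' => fun G v => FForallIn (TmVar v) (im a L' _ (Vz _ _)) end
  | TProd a b => fun L => match L return forall G, var G (mon (S L)) -> d0 G with
      | S (S L') => fun G y =>
          FExistsIn (TmVar y) (FExistsIn (TmVar (Vz _ _)) (FExistsIn (TmVar (Vs _ (Vs _ y)))
            (FExistsIn (TmVar (Vz _ _))
              (FAnd (im a L' _ (Vs _ (Vs _ (Vz _ _))))
                (FAnd (im b L' _ (Vz _ _))
                  (@isKP _ (S L') (Vs _ (Vs _ (Vs _ (Vs _ y)))) (Vs _ (Vs _ (Vz _ _))) (Vz _ _)))))))
      | _ => fun G _ => FFalse G end
  end.

Lemma pext {A} (P Q : A -> Prop) : (forall x, P x <-> Q x) -> P = Q.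
Proof. intro H; apply functional_extensionality; intro x; apply propositional_extensionality; auto. Qed.

Lemma get_val_eq {U} (u0 : U) t (P : sem U t -> Prop) a :
  (forall z, P z <-> z = a) -> get_val u0 P = a.
Proof.
  intro H. unfold get_val. destruct excluded_middle_informative as [h|h].
  - destruct constructive_indefinite_description as [x Hx]; simpl. apply H; exact Hx.
  - exfalso; apply h; exists a; split; [apply H; reflexivity| intros y Hy; symmetry; apply H; exact Hy].
Qed.

Lemma eqf_sem {U} n : forall G (a b : var G (mon n)) (r : env U G),
  holds (eqf n G a b) r <-> lookup a r = lookup b r.
Proof.
  induction n; intros; simpl.
  - tauto.
  - split.
    + intros [H1 H2]. apply pext; intro x; split; intro Hx.
      * destruct (H1 x Hx) as [y [Hy E]]. apply IHn in E. simpl in E. rewrite E; exact Hy.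
      * destruct (H2 x Hx) as [y [Hy E]]. apply IHn in E. simpl in E. rewrite <- E; exact Hy.
    + intro E; split; intros x Hx; exists x; split.
      * rewrite <- E; exact Hx.
      * apply IHn; reflexivity.
      * rewrite E; exact Hx.
      * apply IHn; reflexivity.
Qed.

Lemma liftE_sem {U} (u0 : U) L : forall G (e : expr G TUr) r,
  eval u0 (liftE L G e) r = lift_ur L (eval u0 e r).
Proof. induction L; intros; simpl; [reflexivity| rewrite IHL; reflexivity]. Qed.

Lemma conv_sem {U} (u0 : U) T : forall L G (e : expr G T) r,
  eval u0 (conv T L G e) r = cs T L (eval u0 e r).
Proof.
  induction T; intros L G e r.
  - apply liftE_sem.
  - reflexivity.
  - destruct L as [|[|L]]; try reflexivity.
    cbn [conv eval cs]. unfold kp. rewrite (IHT1 L G (EFst e) r), (IHT2 L G (ESnd e) r); reflexivity.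
  - destruct L as [|L]; try reflexivity.
    cbn [conv eval cs]. apply pext; intro y. split; intros [x [H1 H2]]; exists x; split; auto;
      rewrite IHT in *; simpl in *; auto.
Qed.

Lemma liftE_gf L : forall G (e : expr G TUr), get_free e -> get_free (liftE L G e).
Proof. induction L; simpl; auto. Qed.

Lemma conv_gf T : forall L G (e : expr G T), get_free e -> get_free (conv T L G e).
Proof.
  induction T; intros L G e H; simpl.
  - apply liftE_gf; auto.
  - exact I.
  - destruct L as [|[|L]]; simpl; auto. repeat split; first [apply IHT1|apply IHT2]; exact H.
  - destruct L; simpl; auto. split; [apply IHT; exact I | exact H].
Qed.

Lemma union_kp {U} n (A B : sem U (mon n)) z :
  (exists x, kp A B x /\ x z) <-> z = A \/ z = B.
Proof.
  unfold kp; split.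
  - intros [x [[-> | ->] Hz]]; auto.
  - intros [-> | ->].
    + exists (fun u => u = A); auto.
    + exists (fun u => u = A \/ u = B); auto.
Qed.

Lemma inter_kp {U} (u0 : U) {G n} (p : var G (TSet (TSet (mon n)))) r {A B} :
  lookup p r = kp A B -> forall z, eval u0 (inter p) r z <-> z = A.
Proof.
  intros Hp z. unfold inter. cbn [eval lookup fst snd]. rewrite Hp. rewrite union_kp. split.
  - intros [Hz Hn]. apply NNPP; intro Hne. apply Hn.
    exists (fun u => u = A). split; [unfold kp; left; reflexivity|]. split; [|exact Hne].
    apply union_kp; auto.
  - intros ->. split; [auto|]. intros [x [Hx [_ Hn]]]. destruct Hx as [-> | ->]; apply Hn; auto.
Qed.

Lemma Dp_kp {U} (u0 : U) {G n} (p : var G (TSet (TSet (mon n)))) r {A B} :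
  lookup p r = kp A B -> forall z, eval u0 (Dp p) r z <-> z = B /\ z <> A.
Proof.
  intros Hp z. unfold Dp. cbn [eval lookup fst snd].
  rewrite (inter_kp u0 p r Hp z). rewrite Hp, union_kp. intuition congruence.
Qed.

Lemma sndS_kp {U} (u0 : U) {G n} (p : var G (TSet (TSet (mon n)))) r {A B} :
  lookup p r = kp A B -> forall z, eval u0 (sndS p) r z <-> z = B.
Proof.
  intros Hp z. unfold sndS, Zp. cbn [eval lookup fst snd].
  rewrite (Dp_kp u0 p r Hp z).
  assert (HI : forall t : unit, eval u0 (inter (Vs TUnit p)) (t, r) z <-> z = A)
    by (intro t; exact (inter_kp u0 (Vs TUnit p) (t, r) Hp z)).
  assert (HD : forall x, eval u0 (Dp p) r x <-> x = B /\ x <> A) by exact (Dp_kp u0 p r Hp).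
  destruct (classic (A = B)) as [E|E].
  - split.
    + intros [[H1 H2]|[t [_ H]]]; [exact H1|]. apply HI in H. congruence.
    + intros ->. right. exists tt. split.
      * split; [reflexivity|]. intros [x [Hx _]]. apply HD in Hx. intuition congruence.
      * apply HI; auto.
  - split.
    + intros [[H1 H2]|[t [[_ Hn] H]]]; [exact H1|]. exfalso; apply Hn.
      exists B. split; [apply HD; auto| destruct t; reflexivity].
    + intros ->. left. split; auto.
Qed.

Lemma invUr_sem {U} (u0 : U) L : forall G (v : var G (mon (S L))) r a,
  lookup v r = lift_ur L a -> eval u0 (invUr L G v) r = a.
Proof.
  induction L; intros G v r a H; cbn [invUr eval].
  - rewrite H. apply get_val_eq. intro z; simpl; tauto.
  - apply get_val_eq. intro z. rewrite H. split.
    + intros [x [Hx Hz]]. rewrite Hz. apply IHL. exact Hx.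
    + intros ->. exists (lift_ur L a). split; [reflexivity|]. symmetry; apply IHL; reflexivity.
Qed.

Lemma inv_sem {U} (u0 : U) T : forall L G (v : var G (mon (S L))) r x,
  D T <= L -> lookup v r = cs T L x -> eval u0 (inv T L G v) r = x.
Proof.
  induction T; intros L G v r x HL H.
  - exact (invUr_sem u0 L G v r x H).
  - destruct x; reflexivity.
  - simpl in HL. destruct L as [|[|L]]; try lia. destruct x as [x1 x2].
    cbn [inv eval letE]. cbn in H.
    f_equal; apply get_val_eq; intro z; cbn [eval lookup fst snd].
    + split.
      * intros [w [Hw Hz]]. rewrite Hz. apply IHT1; [lia|]. cbn [lookup fst].
        subst w. apply get_val_eq. exact (@inter_kp _ u0 _ (S L) v r _ _ H).
      * intros ->. exists (cs T1 L x1). split.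
        -- symmetry. refine (get_val_eq u0 (TSet (mon L)) _ _ _). exact (@inter_kp _ u0 _ (S L) v r _ _ H).
        -- symmetry. apply IHT1; [lia|reflexivity].
    + split.
      * intros [w [Hw Hz]]. rewrite Hz. apply IHT2; [lia|]. cbn [lookup fst].
        subst w. apply get_val_eq. exact (@sndS_kp _ u0 _ (S L) v r _ _ H).
      * intros ->. exists (cs T2 L x2). split.
        -- symmetry. refine (get_val_eq u0 (TSet (mon L)) _ _ _). exact (@sndS_kp _ u0 _ (S L) v r _ _ H).
        -- symmetry. apply IHT2; [lia|reflexivity].
  - simpl in HL. destruct L as [|L]; try lia.
    cbn [inv eval]. apply pext. intro z. rewrite H. cbn [cs]. split.
    + intros [w [[x0 [Hx0 ->]] Hz]]. rewrite Hz.
      erewrite IHT; [exact Hx0|lia|reflexivity].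
    + intro Hz. exists (cs T L z). split; [exists z; auto|].
      symmetry. apply IHT; [lia|reflexivity].
Qed.

Lemma isSing_sem {U} {G n} (w : var G (TSet (mon n))) (A : var G (mon n)) (r : env U G) :
  holds (isSing w A) r <-> lookup w r = (fun u => u = lookup A r).
Proof.
  unfold isSing. cbn [holds teval]. setoid_rewrite eqf_sem. cbn [lookup fst snd].
  split.
  - intros [H1 [x [Hx ->]]]. apply pext; intro u; split; [apply H1| intros ->; exact Hx].
  - intros ->. split; [auto| exists (lookup A r); auto].
Qed.

Lemma isPair_sem {U} {G n} (w : var G (TSet (mon n))) (A B : var G (mon n)) (r : env U G) :
  holds (isPair w A B) r <-> lookup w r = (fun u => u = lookup A r \/ u = lookup B r).
Proof.
  unfold isPair. cbn [holds teval]. setoid_rewrite eqf_sem. cbn [lookup fst snd].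
  split.
  - intros [H1 [[x [Hx ->]] [y [Hy ->]]]]. apply pext; intro u; split; [apply H1|].
    intros [-> | ->]; assumption.
  - intros ->. split; [auto| split; [exists (lookup A r)|exists (lookup B r)]; auto].
Qed.

Lemma isKP_sem {U} {G n} (y : var G (TSet (TSet (mon n)))) (A B : var G (mon n)) (r : env U G) :
  holds (isKP y A B) r <-> lookup y r = kp (lookup A r) (lookup B r).
Proof.
  unfold isKP. cbn [holds teval]. setoid_rewrite isSing_sem. setoid_rewrite isPair_sem.
  cbn [lookup fst snd]. unfold kp.
  split.
  - intros [H1 [[x [Hx ->]] [z [Hz ->]]]]. apply pext; intro u; split; [apply H1|].
    intros [-> | ->]; assumption.
  - intros ->. split; [auto| split].
    + exists (fun u => u = lookup A r); auto.
    + exists (fun u => u = lookup A r \/ u = lookup B r); auto.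
Qed.

Lemma imUr_sem {U} L : forall G (v : var G (mon (S L))) (r : env U G),
  holds (imUr L G v) r <-> exists a, lookup v r = lift_ur L a.
Proof.
  induction L; intros G v r; cbn [imUr holds teval].
  - cbn [lookup fst snd eqf holds teval]. split.
    + intros [x [Hx H]]. exists x. apply pext; intro u; split; [apply H|intros ->; exact Hx].
    + intros [a ->]. exists a; split; [reflexivity| auto].
  - setoid_rewrite IHL. setoid_rewrite eqf_sem. cbn [lookup fst snd]. split.
    + intros [x [Hx [[a Ha] H]]]. exists a. cbn [lift_ur]. rewrite <- Ha.
      apply pext; intro u; split; [apply H|intros ->; exact Hx].
    + intros [a Ha]. rewrite Ha. exists (lift_ur L a). split; [reflexivity|].
      split; [exists a; reflexivity| auto].
Qed.

Lemma im_sem {U} T : forall L G (v : var G (mon (S L))) (r : env U G),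
  D T <= L -> (holds (im T L G v) r <-> exists x, lookup v r = cs T L x).
Proof.
  induction T; intros L G v r HL.
  - apply imUr_sem.
  - cbn [im holds teval cs]. split.
    + intro H. exists tt. apply pext; intro u; split; [apply H|tauto].
    + intros [_ ->]. auto.
  - simpl in HL. destruct L as [|[|L]]; try lia.
    assert (IA : forall G (v : var G (mon (S L))) (r : env U G),
               holds (im T1 L G v) r <-> exists x, lookup v r = cs T1 L x)
      by (intros; apply IHT1; lia).
    assert (IB : forall G (v : var G (mon (S L))) (r : env U G),
               holds (im T2 L G v) r <-> exists x, lookup v r = cs T2 L x)
      by (intros; apply IHT2; lia).
    cbn [im holds teval]. setoid_rewrite IA. setoid_rewrite IB.
    setoid_rewrite isKP_sem. cbn [lookup fst snd]. split.
    + intros [s [Hs [A [HA [t [Ht [B [HB [[x1 E1] [[x2 E2] E]]]]]]]]]].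
      exists (x1, x2). rewrite E, E1, E2. reflexivity.
    + intros [[x1 x2] E]. cbn [cs fst snd] in E.
      exists (fun u => u = cs T1 L x1). split; [rewrite E; unfold kp; auto|].
      exists (cs T1 L x1). split; [reflexivity|].
      exists (fun u => u = cs T1 L x1 \/ u = cs T2 L x2). split; [rewrite E; unfold kp; auto|].
      exists (cs T2 L x2). split; [auto|].
      split; [eauto|]. split; [eauto|]. exact E.
  - simpl in HL. destruct L as [|L]; try lia.
    assert (IA : forall G (v : var G (mon (S L))) (r : env U G),
               holds (im T L G v) r <-> exists x, lookup v r = cs T L x)
      by (intros; apply IHT; lia).
    cbn [im holds teval]. setoid_rewrite IA. cbn [lookup fst snd cs]. split.
    + intro H. exists (fun x => lookup v r (cs T L x)). apply pext; intro w; split.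
      * intro Hw. destruct (H w Hw) as [y ->]. exists y; auto.
      * intros [x [Hx ->]]. exact Hx.
    + intros [X ->] w [x [_ ->]]. eauto.
Qed.

Theorem mainTheorem5 :
  forall T : ty, exists d : nat,
  exists (conv : expr [T] (mon d)) (inv : expr [mon d] T) (im : d0 [mon d]),
    get_free conv /\
    forall (U : Type) (u0 : U),
      (forall x1 x2 : sem U T,
          eval u0 conv (x1, tt) = eval u0 conv (x2, tt) -> x1 = x2) /\
      (forall x : sem U T, eval u0 inv (eval u0 conv (x, tt), tt) = x) /\
      (forall y : sem U (mon d),
          holds im (y, tt) <-> exists x : sem U T, y = eval u0 conv (x, tt)).
Proof.
  intro T. exists (S (D T)).
  exists (conv T (D T) [T] (EVar (Vz [] T))), (inv T (D T) [mon (S (D T))] (Vz [] (mon (S (D T))))),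
    (im T (D T) [mon (S (D T))] (Vz [] (mon (S (D T))))).
  split; [apply conv_gf; exact I|].
  intros U u0.
  assert (HI : forall x : sem U T,
             eval u0 (inv T (D T) [mon (S (D T))] (Vz [] (mon (S (D T)))))
               (eval u0 (conv T (D T) [T] (EVar (Vz [] T))) (x, tt), tt) = x).
  { intro x. apply inv_sem; [lia|]. cbn [lookup fst]. rewrite conv_sem. reflexivity. }
  split; [|split; [exact HI|]].
  - intros x1 x2 E. rewrite <- (HI x1), <- (HI x2), E. reflexivity.
  - intro y. rewrite im_sem by lia. cbn [lookup fst].
    setoid_rewrite conv_sem. cbn [eval lookup fst]. reflexivity.
Qed.
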